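(* Let $E$ be a contact Riemannian Lie algebroid with associated almost contact Riemannian structure $(F_E,\xi,\eta,g_E)$, let $\nabla$ be the Levi-Civita connection of $g_E$ and $N_E^{(3)}=\frac12\mathcal{L}_\xi F_E$. Then for all $s,s_1,s_2\in\Gamma(E)$: (i) $g_E(N_E^{(3)}(s_1),s_2)=g_E(s_1,N_E^{(3)}(s_2))$; (ii) $\nabla_s\xi=-F_E(s)-F_E(N_E^{(3)}(s))$; (iii) $F_E\circ N_E^{(3)}=-N_E^{(3)}\circ F_E$; (iv) $\operatorname{trace}N_E^{(3)}=0$, $\operatorname{trace}(N_E^{(3)}\circ F_E)=0$, $N_E^{(3)}(\xi)=0$, $\eta(N_E^{(3)}(s))=0$; (v) $(\nabla_{s_1}F_E)(s_2)+(\nabla_{F_E(s_1)}F_E)F_E(s_2)=2g_E(s_1,s_2)\xi-\eta(s_2)\big(s_1+N_E^{(3)}(s_1)+\eta(s_1)\xi\big)$.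
   Context: A Lie algebroid $(E,\rho_E,[\cdot,\cdot]_E)$ over $M$ is a vector bundle with anchor $\rho_E:E\to TM$ and Lie bracket on $\Gamma(E)$ with $[s_1,fs_2]_E=f[s_1,s_2]_E+\rho_E(s_1)(f)s_2$. For a 1-form $\eta$, $(d_E\eta)(s_1,s_2)=\frac12\{\rho_E(s_1)(\eta(s_2))-\rho_E(s_2)(\eta(s_1))-\eta([s_1,s_2]_E)\}$. For $E$ of rank $2m+1$, an almost contact Riemannian structure $(F_E,\xi,\eta,g_E)$: endomorphism $F_E$, $\xi\in\Gamma(E)$, $\eta\in\Gamma(E^* )$, bundle metric $g_E$ with $F_E^2=-I_E+\eta\otimes\xi$, $\eta(\xi)=1$, $g_E(F_Es_1,F_Es_2)=g_E(s_1,s_2)-\eta(s_1)\eta(s_2)$; fundamental form $\Omega_E(s_1,s_2)=g_E(s_1,F_Es_2)$. $E$ is contact Riemannian if also $\eta\wedge(d_E\eta)^m$ vanishes nowhere and $d_E\eta=\Omega_E$. $(\mathcal{L}_\xi F_E)(s)=[\xi,F_Es]_E-F_E[\xi,s]_E$. The Levi-Civita connection $\nabla$ is the unique $E$-connection ($\nabla_{fs}s'=f\nabla_ss'$, $\nabla_s(fs')=f\nabla_ss'+\rho_E(s)(f)s'$) that is torsion-free ($\nabla_{s_1}s_2-\nabla_{s_2}s_1=[s_1,s_2]_E$) and metric ($\rho_E(s)(g_E(s_1,s_2))=g_E(\nabla_ss_1,s_2)+g_E(s_1,\nabla_ss_2)$); $(\nabla_sF_E)s'=\nabla_s(F_Es')-F_E(\nabla_ss')$.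 *)

(* Defs.v *)
From HB Require Import structures.
From mathcomp Require Import all_boot all_order all_algebra all_fingroup.
From mathcomp Require Import reals.
Set Implicit Arguments. Unset Strict Implicit. Unset Printing Implicit Defensive.
Import Order.TTheory GRing.Theory Num.Theory.
Local Open Scope ring_scope.

Section LieAlgebroidDefs.
Variables (R : realType) (C : comAlgType R) (V : lmodType C).
(* C plays the role of C^oo(M) (an R-algebra of real functions on M),
   V plays the role of Gamma(E) (a C-module). *)

(* D is a vector field, i.e. an R-linear derivation of C. *)
Definition is_derivation (D : C -> C) : Prop :=
  [/\ forall f h, D (f + h) = D f + D h,
      forall f h, D (f * h) = f * D h + D f * h
    & forall r : R, D (r%:A) = 0].

Record lie_algebroid (rho : V -> C -> C) (br : V -> V -> V) : Prop := {
  rho_add : forall s t f, rho (s + t) f = rho s f + rho t f;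
  rho_scale : forall (h : C) s f, rho (h *: s) f = h * rho s f;
  rho_der : forall s, is_derivation (rho s);
  br_addl : forall s t u, br (s + t) u = br s u + br t u;
  br_scalel : forall (r : R) s t, br (r%:A *: s) t = r%:A *: br s t;
  br_anti : forall s t, br s t = - br t s;
  br_jacobi : forall s t u, br s (br t u) + br t (br u s) + br u (br s t) = 0;
  br_leibniz : forall s t (f : C), br s (f *: t) = f *: br s t + rho s f *: t;
  rho_br : forall s t f, rho (br s t) f = rho s (rho t f) - rho t (rho s f)
}.

(* V is the module of smooth sections of a real vector bundle of rank rk over
   the point set M:  ev x is evaluation of functions at the point x, C is a
   separating algebra of real functions, and (e, eps) is a finite dual basis
   exhibiting V as a finitely generated projective C-module (Serre-Swan),
   whose fibre dimension at every point is rk. *)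
Record vector_bundle (M : Type) (ev : M -> C -> R) (n : nat)
    (e : 'I_n -> V) (eps : 'I_n -> V -> C) (rk : nat) : Prop := {
  ev_add : forall x f h, ev x (f + h) = ev x f + ev x h;
  ev_mul : forall x f h, ev x (f * h) = ev x f * ev x h;
  ev_alg : forall x (r : R), ev x (r%:A) = r;
  ev_sep : forall f, (forall x, ev x f = 0) -> f = 0;
  eps_add : forall i s t, eps i (s + t) = eps i s + eps i t;
  eps_scale : forall i (h : C) s, eps i (h *: s) = h * eps i s;
  dual_basis : forall s, s = \sum_(i < n) eps i s *: e i;
  fibre_rank : forall x, ev x (\sum_(i < n) eps i (e i)) = rk%:R
}.

Definition vanish_at (M : Type) (ev : M -> C -> R) (n : nat)
    (eps : 'I_n -> V -> C) (x : M) (s : V) : Prop :=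
  forall i, ev x (eps i s) = 0.

Record almost_contact_riem (M : Type) (ev : M -> C -> R) (n : nat)
    (eps : 'I_n -> V -> C)
    (F : V -> V) (xi : V) (eta : V -> C) (g : V -> V -> C) : Prop := {
  F_add : forall s t, F (s + t) = F s + F t;
  F_scale : forall (h : C) s, F (h *: s) = h *: F s;
  eta_add : forall s t, eta (s + t) = eta s + eta t;
  eta_scale : forall (h : C) s, eta (h *: s) = h * eta s;
  g_addl : forall s t u, g (s + t) u = g s u + g t u;
  g_scalel : forall (h : C) s t, g (h *: s) t = h * g s t;
  g_sym : forall s t, g s t = g t s;
  g_pos : forall x s, 0 <= ev x (g s s);
  g_def : forall x s, ev x (g s s) = 0 -> vanish_at ev eps x s;
  F_sq : forall s, F (F s) = - s + eta s *: xi;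
  eta_xi : eta xi = 1;
  g_F : forall s t, g (F s) (F t) = g s t - eta s * eta t
}.

(* d_E eta, with the 1/2 convention of the paper *)
Definition dE (rho : V -> C -> C) (br : V -> V -> V) (eta : V -> C)
    (s t : V) : C :=
  (2^-1 : R)%:A * (rho s (eta t) - rho t (eta s) - eta (br s t)).

Definition Omega (g : V -> V -> C) (F : V -> V) (s t : V) : C := g s (F t).

(* (eta /\ om^m)(s_0, ..., s_2m), up to a nonzero normalising constant:
   sum over sigma in S_{2m+1} of sgn(sigma) eta(s_sigma(0))
   prod_{k<m} om(s_sigma(2k+1), s_sigma(2k+2)). *)
Definition eta_wedge_pow (m : nat) (eta : V -> C) (om : V -> V -> C)
    (s : 'I_(m.*2.+1) -> V) : C :=
  \sum_(sg : 'S_(m.*2.+1))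
     (-1) ^+ (odd_perm sg) *
     (eta (s (sg ord0)) *
      \prod_(k < m) om (s (sg (inord k.*2.+1))) (s (sg (inord k.*2.+2)))).

Definition contact_riem (M : Type) (ev : M -> C -> R) (n : nat)
    (eps : 'I_n -> V -> C) (m : nat)
    (rho : V -> C -> C) (br : V -> V -> V)
    (F : V -> V) (xi : V) (eta : V -> C) (g : V -> V -> C) : Prop :=
  [/\ almost_contact_riem ev eps F xi eta g,
      (forall x : M, exists s : 'I_(m.*2.+1) -> V,
          ev x (eta_wedge_pow eta (dE rho br eta) s) != 0)
    & forall s t, dE rho br eta s t = Omega g F s t].

Record levi_civita (rho : V -> C -> C) (br : V -> V -> V)
    (g : V -> V -> C) (nabla : V -> V -> V) : Prop := {
  nab_addl : forall s t u, nabla (s + t) u = nabla s u + nabla t u;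
  nab_scalel : forall (h : C) s u, nabla (h *: s) u = h *: nabla s u;
  nab_addr : forall s t u, nabla s (t + u) = nabla s t + nabla s u;
  nab_leibniz : forall s (h : C) u,
      nabla s (h *: u) = h *: nabla s u + rho s h *: u;
  nab_torsion : forall s t, nabla s t - nabla t s = br s t;
  nab_metric : forall s t u,
      rho s (g t u) = g (nabla s t) u + g t (nabla s u)
}.

(* N^(3) = 1/2 L_xi F *)
Definition lieF (br : V -> V -> V) (F : V -> V) (xi : V) (s : V) : V :=
  br xi (F s) - F (br xi s).
Definition N3 (br : V -> V -> V) (F : V -> V) (xi : V) (s : V) : V :=
  (2^-1 : R)%:A *: lieF br F xi s.

Definition trace (n : nat) (e : 'I_n -> V) (eps : 'I_n -> V -> C)
    (T : V -> V) : C :=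
  \sum_(i < n) eps i (T (e i)).

Definition covF (nabla : V -> V -> V) (F : V -> V) (s t : V) : V :=
  nabla s (F t) - F (nabla s t).

End LieAlgebroidDefs.

(* Main.v *)
Require Import Defs.
From HB Require Import structures.
From mathcomp Require Import all_boot all_order all_algebra all_fingroup.
From mathcomp Require Import reals ring.
Import Order.TTheory GRing.Theory Num.Theory.
Local Open Scope ring_scope.

Lemma from_sum3 (K : comNzRingType) (a b c : K) : a + b + c = 0 -> a = - b - c.
Proof. move=> H; have -> : a = (a + b + c) - b - c by ring. by rewrite H sub0r. Qed.

Arguments from_sum3 {K a b c}.

Section Prf.
Variables (R : realType) (C : comAlgType R) (V : lmodType C) (M : Type)
  (ev : M -> C -> R) (n : nat) (e : 'I_n -> V) (eps : 'I_n -> V -> C)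
  (m : nat) (rho : V -> C -> C) (br : V -> V -> V)
  (F : V -> V) (xi : V) (eta : V -> C) (g : V -> V -> C)
  (nabla : V -> V -> V).
Hypotheses (LA : lie_algebroid rho br) (VB : vector_bundle ev e eps m.*2.+1)
  (CR : contact_riem ev eps m rho br F xi eta g) (LC : levi_civita rho br g nabla).

Let AC : almost_contact_riem ev eps F xi eta g. Proof. by case: CR. Qed.
Let dEO : forall s t, dE rho br eta s t = Omega g F s t. Proof. by case: CR. Qed.

Let hf : C := (2^-1 : R)%:A.
Let hfhf : hf + hf = 1.
Proof. rewrite /hf -scalerDl. have -> : (2^-1 + 2^-1 : R) = 1 by field. by rewrite scale1r. Qed.
Let two_hf : 2 * hf = 1.
Proof. by rewrite mulrDl mul1r hfhf. Qed.
Let dbl0 (c : C) : c + c = 0 -> c = 0.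
Proof. move=> H; have -> : c = hf * (c + c) by rewrite mulrDr -mulrDl hfhf mul1r. by rewrite H mulr0. Qed.
Let two0 (c : C) : 2 * c = 0 -> c = 0.
Proof. move=> H; apply: dbl0; by rewrite -H mulrDl mul1r. Qed.
Let two_inj (a b : C) : 2 * a = 2 * b -> a = b.
Proof. move=> H; apply: subr0_eq; apply: two0; by rewrite mulrBr H subrr. Qed.
Let vdbl0 (v : V) : v + v = 0 -> v = 0.
Proof. move=> H; have -> : v = hf *: (v + v) by rewrite scalerDr -scalerDl hfhf scale1r. by rewrite H scaler0. Qed.

Let gsym s t : g s t = g t s. Proof. exact: (g_sym AC). Qed.
Let gDl s t u : g (s + t) u = g s u + g t u. Proof. exact: (g_addl AC). Qed.
Let gZl (f : C) s t : g (f *: s) t = f * g s t. Proof. exact: (g_scalel AC). Qed.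
Let g0l t : g 0 t = 0.
Proof. by apply/eqP; rewrite -(subrr (g 0 t)) -[X in g X _ - _]addr0 gDl addrK. Qed.
Let gNl s t : g (- s) t = - g s t.
Proof. by apply/eqP; rewrite -subr_eq0 opprK -gDl addNr g0l. Qed.
Let gDr s t u : g u (s + t) = g u s + g u t. Proof. by rewrite gsym gDl !(gsym u). Qed.
Let gZr (f : C) s t : g t (f *: s) = f * g t s. Proof. by rewrite gsym gZl gsym. Qed.
Let g0r t : g t 0 = 0. Proof. by rewrite gsym g0l. Qed.
Let gNr s t : g t (- s) = - g t s. Proof. by rewrite gsym gNl gsym. Qed.

Let ev0 x : ev x 0 = 0.
Proof. by apply/eqP; rewrite -(subrr (ev x 0)) -[X in ev x X - _]addr0 (ev_add VB) addrK. Qed.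
Let red (c : C) : c * c = 0 -> c = 0.
Proof.
move=> H; apply: (ev_sep VB) => x; apply/eqP.
have : ev x (c * c) == 0 by rewrite H ev0.
by rewrite (ev_mul VB) mulf_eq0 orbb.
Qed.
Let eps0 i : eps i 0 = 0.
Proof. by have := eps_scale VB i 0 0; rewrite scale0r mul0r. Qed.
Let gnd0 w : g w w = 0 -> w = 0.
Proof.
move=> H; rewrite (dual_basis VB w); apply: big1 => i _.
have -> : eps i w = 0.
  apply: (ev_sep VB) => x; apply: (g_def AC); by rewrite H ev0.
by rewrite scale0r.
Qed.
Let gnd u v : (forall z, g u z = g v z) -> u = v.
Proof. move=> H; apply: subr0_eq; apply: gnd0. by rewrite gDl gNl H subrr. Qed.

Let FD s t : F (s + t) = F s + F t. Proof. exact: (F_add AC). Qed.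
Let FZ (f : C) s : F (f *: s) = f *: F s. Proof. exact: (F_scale AC). Qed.
Let F0 : F 0 = 0. Proof. by have := FZ 0 0; rewrite !scale0r. Qed.
Let FN s : F (- s) = - F s. Proof. by rewrite -scaleN1r FZ scaleN1r. Qed.
Let eD s t : eta (s + t) = eta s + eta t. Proof. exact: (eta_add AC). Qed.
Let eZ (f : C) s : eta (f *: s) = f * eta s. Proof. exact: (eta_scale AC). Qed.
Let e0 : eta 0 = 0. Proof. by have := eZ 0 0; rewrite scale0r mul0r. Qed.
Let eN s : eta (- s) = - eta s. Proof. by rewrite -scaleN1r eZ mulN1r. Qed.
Let exi : eta xi = 1. Proof. exact: (eta_xi AC). Qed.
Let FF s : F (F s) = - s + eta s *: xi. Proof. exact: (F_sq AC). Qed.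
Let gFF s t : g (F s) (F t) = g s t - eta s * eta t. Proof. exact: (g_F AC). Qed.

Let F3 s : eta s *: F xi = eta (F s) *: xi.
Proof.
have := FF (F s); rewrite [F (F s)]FF FD FN FZ.
by move/addrI.
Qed.
Let Fxi : F xi = 0.
Proof.
have H1 := F3 xi; rewrite exi scale1r in H1.
set c := eta (F xi) in H1.
have H2 : (c * c) *: xi = 0.
  by rewrite -scalerA -H1 -FZ -H1 FF exi scale1r addNr.
have : c * c = 0 by have := congr1 eta H2; rewrite eZ exi mulr1 e0.
by move/red => c0; rewrite H1 c0 scale0r.
Qed.
Let eF s : eta (F s) = 0.
Proof.
have := F3 s; rewrite Fxi scaler0 => /(congr1 eta).
by rewrite eZ exi mulr1 e0.
Qed.
Let gxi s : g s xi = eta s.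
Proof. by have := gFF s xi; rewrite Fxi g0r exi mulr1 => /eqP; rewrite eq_sym subr_eq0 => /eqP. Qed.
Let gxil s : g xi s = eta s. Proof. by rewrite gsym gxi. Qed.
Let gFs s t : g (F s) t = - g s (F t).
Proof.
have := gFF s (F t); rewrite eF mulr0 subr0 FF gDr gNr gZr gxi eF mulr0 addr0.
by move=> <-; rewrite opprK.
Qed.

Let rD s f h : rho s (f + h) = rho s f + rho s h. Proof. by case: (rho_der LA s). Qed.
Let rM s f h : rho s (f * h) = f * rho s h + rho s f * h. Proof. by case: (rho_der LA s). Qed.
Let rA s (r : R) : rho s r%:A = 0. Proof. by case: (rho_der LA s). Qed.
Let r0 s : rho s 0 = 0.
Proof. have := rD s 0 0; rewrite addr0 => /(congr1 (fun y => y - rho s 0)). by rewrite subrr addrK. Qed.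
Let rN s f : rho s (- f) = - rho s f.
Proof. by apply/eqP; rewrite -subr_eq0 opprK -rD addNr r0. Qed.
Let r1 s : rho s 1 = 0. Proof. by rewrite -(rA s 1) scale1r. Qed.
Let r2 s f : rho s (2 * f) = 2 * rho s f.
Proof. by rewrite rM -[2 : C]/(1 + 1) rD r1 addr0 mul0r addr0. Qed.
Let rhf s f : rho s (hf * f) = hf * rho s f.
Proof. by rewrite rM rA mul0r addr0. Qed.
Let rDs s t f : rho (s + t) f = rho s f + rho t f. Proof. exact: (rho_add LA). Qed.
Let rZs (h : C) s f : rho (h *: s) f = h * rho s f. Proof. exact: (rho_scale LA). Qed.

Let bDl s t u : br (s + t) u = br s u + br t u. Proof. exact: (br_addl LA). Qed.
Let banti s t : br s t = - br t s. Proof. exact: (br_anti LA). Qed.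
Let bL s t (f : C) : br s (f *: t) = f *: br s t + rho s f *: t. Proof. exact: (br_leibniz LA). Qed.
Let bDr s t u : br u (s + t) = br u s + br u t.
Proof. by rewrite banti bDl opprD -!banti. Qed.
Let b0r s : br s 0 = 0. Proof. by have := bL s 0 0; rewrite !scale0r r0 scale0r addr0. Qed.
Let bss s : br s s = 0. Proof. by apply: vdbl0; rewrite {1}banti addNr. Qed.
Let bNr s t : br s (- t) = - br s t.
Proof. by apply/eqP; rewrite -subr_eq0 opprK -bDr addNr b0r. Qed.

Let nDl s t u : nabla (s + t) u = nabla s u + nabla t u. Proof. exact: (nab_addl LC). Qed.
Let nZl (h : C) s u : nabla (h *: s) u = h *: nabla s u. Proof. exact: (nab_scalel LC). Qed.
Let nDr s t u : nabla s (t + u) = nabla s t + nabla s u. Proof. exact: (nab_addr LC). Qed.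
Let nL s (h : C) u : nabla s (h *: u) = h *: nabla s u + rho s h *: u. Proof. exact: (nab_leibniz LC). Qed.
Let ntor s t : nabla s t - nabla t s = br s t. Proof. exact: (nab_torsion LC). Qed.
Let nmet s t u : rho s (g t u) = g (nabla s t) u + g t (nabla s u). Proof. exact: (nab_metric LC). Qed.
Let n0r s : nabla s 0 = 0. Proof. by have := nL s 0 0; rewrite !scale0r r0 scale0r addr0. Qed.
Let nNr s t : nabla s (- t) = - nabla s t.
Proof. by apply/eqP; rewrite -subr_eq0 opprK -nDr addNr n0r. Qed.

Let D s t := rho s (eta t) - rho t (eta s) - eta (br s t).
Let DE s t : D s t = 2 * g s (F t).
Proof.
have := dEO s t; rewrite /dE /Omega -/hf => <-.
by rewrite mulrA two_hf mul1r.
Qed.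
Let Key1 t : eta (br xi t) = rho xi (eta t).
Proof.
have := DE xi t; rewrite gxil eF mulr0 /D exi r1 subr0 => /eqP.
by rewrite subr_eq0 => /eqP.
Qed.

Let L s := br xi (F s) - F (br xi s).
Let Lxi : L xi = 0. Proof. by rewrite /L Fxi b0r bss F0 subrr. Qed.
Let eL s : eta (L s) = 0. Proof. by rewrite /L eD eN Key1 !eF r0 subrr. Qed.
Let LD s t : L (s + t) = L s + L t.
Proof. rewrite /L FD !bDr FD opprD. by rewrite addrACA. Qed.
Let LZ (f : C) s : L (f *: s) = f *: L s.
Proof.
rewrite /L FZ !bL FD FZ FZ scalerBr opprD addrACA.
by rewrite subrr addr0.
Qed.
Let LF s : L (F s) = - F (L s).
Proof.
apply: gnd => z; rewrite /L FD FN !FF !bDr bNr bL bss scaler0 add0r.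
rewrite ?(gDl, gNl, gZl) Key1 !gxil; ring.
Qed.

Let Kosz X Y Z : 2 * g (nabla X Y) Z = rho X (g Y Z) + rho Y (g X Z) - rho Z (g X Y)
   + g (br X Y) Z - g (br X Z) Y - g (br Y Z) X.
Proof.
rewrite -!ntor !nmet !gDl !gNl (gsym Y (nabla X Z)) (gsym X (nabla Y Z)) (gsym X (nabla Z Y)).
ring.
Qed.

Let dD X Y Z : rho X (D Y Z) + rho Y (D Z X) + rho Z (D X Y)
   - D (br X Y) Z - D (br Y Z) X - D (br Z X) Y = 0.
Proof.
have J := congr1 eta (br_jacobi LA Z X Y); rewrite e0 !eD in J.
have J' := from_sum3 J.
rewrite /D (banti (br X Y) Z) (banti (br Y Z) X) (banti (br Z X) Y) !eN.
rewrite !rD !rN !(rho_br LA) J'; ring.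
Qed.

Let Lg X Z := rho xi (g X Z) - g (br xi X) Z - g X (br xi Z).
Let LgD X Z1 Z2 : Lg X (Z1 + Z2) = Lg X Z1 + Lg X Z2.
Proof. rewrite /Lg !gDr rD bDr gDr; ring. Qed.
Let LgZ X (f : C) Z : Lg X (f *: Z) = f * Lg X Z.
Proof. rewrite /Lg !gZr rM bL gDr !gZr; ring. Qed.
Let LgN X Z : Lg X (- Z) = - Lg X Z.
Proof. rewrite /Lg !gNr rN bNr gNr; ring. Qed.
Let Lgxi X : Lg X xi = 0.
Proof. by rewrite /Lg !gxi Key1 bss g0r subr0 subrr. Qed.
Let Lgsym X Z : Lg X Z = Lg Z X.
Proof. rewrite /Lg (gsym X Z) (gsym X (br xi Z)) (gsym (br xi X) Z); ring. Qed.

Let LPhi X Y : Lg X (F Y) = - g X (L Y).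
Proof.
have H : rho xi (g X (F Y)) - g (br xi X) (F Y) + g (br xi Y) (F X) = 0.
  apply: two0; have := dD xi X Y.
  rewrite !DE Fxi g0r mulr0 gxil eF mulr0 !r0 !addr0 (banti Y xi) gNl g0r mulr0 subr0.
  rewrite r2 => <-; ring.
rewrite /Lg /L gDr gNr (gsym X (F (br xi Y))) gFs.
apply/eqP; rewrite -subr_eq0; apply/eqP; rewrite -H; ring.
Qed.
Let LgF X Y : Lg X Y = g X (L (F Y)).
Proof.
have HY : Y = - F (F Y) + eta Y *: xi by rewrite FF opprD opprK subrK.
by rewrite {1}HY LgD LgN LgZ Lgxi mulr0 addr0 LPhi opprK.
Qed.

Let N := N3 br F xi.
Let NE s : N s = hf *: L s. Proof. by []. Qed.

Let Nxi : N xi = 0. Proof. by rewrite NE Lxi scaler0. Qed.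
Let eNs s : eta (N s) = 0. Proof. by rewrite NE eZ eL mulr0. Qed.
Let FNs s : F (N s) = - N (F s).
Proof. by rewrite !NE FZ LF scalerN opprK. Qed.

Let nxi X : nabla X xi = - F X - F (N X).
Proof.
apply: gnd => z.
have R1 : g (- F X - F (N X)) z = g X (F z) + hf * g z (L (F X)).
  by rewrite FNs opprK gDl gNl gFs opprK NE gZl (gsym (L (F X)) z).
rewrite R1; apply: two_inj.
rewrite mulrDr (mulrA 2 hf) two_hf mul1r.
rewrite Kosz gxil gxi gxi (banti X xi) gNl.
have E1 := DE X z; rewrite /D in E1.
have E2 := LgF z X; rewrite Lgsym /Lg in E2.
have -> : eta (br X z) = rho X (eta z) - rho z (eta X) - 2 * g X (F z).
  by rewrite -E1; ring.
have -> : g (br xi z) X = rho xi (g X z) - g (br xi X) z - g z (L (F X)).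
  by rewrite -E2 (gsym X (br xi z)); ring.
ring.
Qed.


Let LN s : L (- s) = - L s. Proof. by rewrite -scaleN1r LZ scaleN1r. Qed.
Let Lsym X Y : g (L X) Y = g X (L Y).
Proof.
have Wsym a b : g a (L (F b)) = g b (L (F a)) by rewrite -!LgF Lgsym.
have LX : L X = F (L (F X)) by rewrite LF FN FF eL scale0r addr0 opprK.
rewrite LX gFs (gsym (L (F X)) (F Y)) -Wsym FF LD LN LZ Lxi scaler0 addr0.
by rewrite gNr opprK.
Qed.
Let Nsym X Y : g (N X) Y = g X (N Y).
Proof. by rewrite !NE gZl gZr Lsym. Qed.
Let NS a b : g (N a) b = g (N b) a. Proof. by rewrite Nsym gsym. Qed.
Let ND s t : N (s + t) = N s + N t. Proof. by rewrite !NE LD scalerDr. Qed.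
Let NZ (f : C) s : N (f *: s) = f *: N s. Proof. by rewrite !NE LZ !scalerA mulrC. Qed.
Let NN s : N (- s) = - N s. Proof. by rewrite -scaleN1r NZ scaleN1r. Qed.

Let islin (A : V -> V) := (forall s t, A (s + t) = A s + A t) /\ (forall (f : C) s, A (f *: s) = f *: A s).
Let lin_sum A (c : 'I_n -> C) (v : 'I_n -> V) : islin A ->
  A (\sum_(i < n) c i *: v i) = \sum_(i < n) c i *: A (v i).
Proof.
case=> AD AZ; apply: (big_ind2 (fun x y => A x = y)).
- by have := AZ 0 0; rewrite !scale0r.
- by move=> x1 x2 y1 y2 <- <-; rewrite AD.
- by move=> i _; rewrite AZ.
Qed.
Let eps_sum i (c : 'I_n -> C) (v : 'I_n -> V) :
  eps i (\sum_(j < n) c j *: v j) = \sum_(j < n) c j * eps i (v j).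
Proof.
apply: (big_ind2 (fun x y => eps i x = y)).
- exact: eps0.
- by move=> x1 x2 y1 y2 <- <-; rewrite (eps_add VB).
- by move=> j _; rewrite (eps_scale VB).
Qed.
Let trace_exp A B : islin A -> trace e eps (fun s => A (B s)) =
  \sum_(i < n) \sum_(j < n) eps j (B (e i)) * eps i (A (e j)).
Proof.
move=> lA; rewrite /trace; apply: eq_bigr => i _.
by rewrite {1}(dual_basis VB (B (e i))) lin_sum // eps_sum.
Qed.
Let trace_comm A B : islin A -> islin B ->
  trace e eps (fun s => A (B s)) = trace e eps (fun s => B (A s)).
Proof.
move=> lA lB; rewrite !trace_exp // exchange_big.
apply: eq_bigr => i _; apply: eq_bigr => j _; by rewrite mulrC.
Qed.
Let trace_ext A A' : (forall s, A s = A' s) -> trace e eps A = trace e eps A'.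
Proof. by move=> H; rewrite /trace; apply: eq_bigr => i _; rewrite H. Qed.
Let traceN A : trace e eps (fun s => - A s) = - trace e eps A.
Proof.
rewrite /trace -sumrN; apply: eq_bigr => i _.
by rewrite -scaleN1r (eps_scale VB) mulN1r.
Qed.
Let linF : islin F. Proof. by split. Qed.
Let linN : islin N. Proof. by split. Qed.
Let linNF : islin (fun s => N (F s)). Proof. by split=> *; rewrite ?FD ?ND ?FZ ?NZ. Qed.
Let NFF s : N (F (F s)) = - N s. Proof. by rewrite FF ND NN NZ Nxi scaler0 addr0. Qed.

Let trN : trace e eps N = 0.
Proof.
apply: dbl0.
have H : trace e eps N = trace e eps (fun s => F (N (F s))).
  by apply: trace_ext => s; rewrite FNs NFF opprK.
rewrite {1}H (trace_comm F (fun s => N (F s)) linF linNF) (trace_ext _ _ NFF) traceN.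
by rewrite addNr.
Qed.
Let trNF : trace e eps (fun s => N (F s)) = 0.
Proof.
apply: dbl0.
rewrite {1}(trace_comm N F linN linF) (trace_ext _ _ FNs) traceN.
by rewrite addNr.
Qed.

Let T X Y Z := g (covF nabla F X Y) Z.
Let a X W := g (nabla X xi) W.
Let TE X Y Z : T X Y Z = g (nabla X (F Y)) Z + g (nabla X Y) (F Z).
Proof. by rewrite /T /covF gDl gNl gFs opprK. Qed.

Let Ta X Y Z : T X Y Z = - T X Z Y.
Proof.
have M1 := nmet X (F Y) Z; rewrite gFs rN nmet in M1.
rewrite !TE.
have -> : g (nabla X (F Y)) Z = - (g (nabla X Y) (F Z) + g Y (nabla X (F Z))) - g (F Y) (nabla X Z).
  by rewrite M1; ring.
rewrite (gsym Y (nabla X (F Z))) (gsym (F Y) (nabla X Z)); ring.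
Qed.

Let Tcyc' X Y Z : T X Z Y + T Y X Z + T Z Y X = 0.
Proof.
have H0 : rho X (g Y (F Z)) + rho Y (g Z (F X)) + rho Z (g X (F Y))
   - g (br X Y) (F Z) - g (br Y Z) (F X) - g (br Z X) (F Y) = 0.
  apply: two0; rewrite -[RHS](dD X Y Z) !DE !r2; ring.
rewrite !nmet -!ntor ?(gDl, gNl) !(gsym _ (nabla _ _)) in H0.
rewrite !TE -H0; ring.
Qed.
Let Tcyc X Y Z : T X Y Z + T Y Z X + T Z X Y = 0.
Proof.
have := Tcyc' X Y Z; rewrite (Ta X Z Y) (Ta Y X Z) (Ta Z Y X) => H.
by rewrite -oppr0 -H; ring.
Qed.

Let TP X Y Z : T X (F Y) Z - T X Y (F Z) = a X Y * eta Z + eta Y * a X Z.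
Proof.
have HR : rho X (eta Y) = eta (nabla X Y) + a X Y.
  by rewrite -[eta Y]gxi nmet gxi (gsym Y).
rewrite !TE !FF nDr nNr nL ?(gDl, gNl, gZl, gDr, gNr, gZr) ?gxi ?gxil HR /a; ring.
Qed.
Let TX X Z : T X xi Z = a X (F Z).
Proof. by rewrite TE Fxi n0r g0l add0r. Qed.
Let TL Y Z X : T Y Z (F (F X)) = - T Y Z X + eta X * T Y Z xi.
Proof. by rewrite /T FF gDr gNr gZr. Qed.

Let aYFZ Y Z : a Y (F Z) = - g Y Z + eta Y * eta Z - g (N Y) Z.
Proof.
rewrite /a nxi gDl gNl gFF gNl gFF eNs mul0r subr0; ring.
Qed.
Let aFXY X Y : a (F X) Y = g X Y - eta X * eta Y - g (N X) Y.
Proof.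
rewrite /a nxi FNs NFF opprK FF.
rewrite ?(gDl, gNl, gZl) gxil; ring.
Qed.

Let S X Y Z := T X Y Z + T (F X) (F Y) Z.
Let Ex X Y Z := eta X * a Y (F Z) - eta Z * a Y (F X) + eta Z * a (F X) Y + eta Y * a (F X) Z.
Let Lcyc X Y Z : S X Y Z + S Z X Y = Ex X Y Z.
Proof.
have P1 : T (F X) (F Y) Z = T (F X) Y (F Z) + a (F X) Y * eta Z + eta Y * a (F X) Z.
  by rewrite -addrA -TP; ring.
have B1 := from_sum3 (Tcyc (F X) Y (F Z)).
have P2 : T Y (F Z) (F X) = T Y Z (F (F X)) + a Y Z * eta (F X) + eta Z * a Y (F X).
  by rewrite -addrA -TP; ring.
have B2 : T Z X Y = - T X Y Z - T Y Z X.
  by have H := Tcyc X Y Z; rewrite -[LHS]subr0 -H; ring.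
rewrite /S /Ex P1 B1 P2 TL (Ta Y Z xi) TX eF B2; ring.
Qed.

Let partv X Y : covF nabla F X Y + covF nabla F (F X) (F Y)
        = (2 * g X Y) *: xi - eta Y *: (X + N X + eta X *: xi).
Proof.
apply: gnd => Z; rewrite gDl -/(T X Y Z) -/(T (F X) (F Y) Z) -/(S X Y Z).
have -> : g ((2 * g X Y) *: xi - eta Y *: (X + N X + eta X *: xi)) Z
   = 2 * g X Y * eta Z - eta Y * (g X Z + g (N X) Z + eta X * eta Z).
  by rewrite gDl gNl (gZl _ xi) (gZl (eta Y)) !gDl (gZl (eta X)) !gxil.
apply: two_inj.
have -> : 2 * S X Y Z = Ex X Y Z + Ex Y Z X - Ex Z X Y.
  rewrite -Lcyc -(Lcyc Y Z X) -(Lcyc Z X Y); ring.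
rewrite /Ex !aYFZ !aFXY.
rewrite (gsym Y X) (gsym Z X) (gsym Z Y) (NS Y X) (NS Z X) (NS Z Y); ring.
Qed.

Lemma mainP :
  let N := N3 br F xi in
  [/\ (forall s1 s2, g (N s1) s2 = g s1 (N s2)),
      (forall s, nabla s xi = - F s - F (N s)),
      (forall s, F (N s) = - N (F s)),
      [/\ trace e eps N = 0, trace e eps (fun s => N (F s)) = 0,
          N xi = 0 & forall s, eta (N s) = 0]
    & forall s1 s2,
        covF nabla F s1 s2 + covF nabla F (F s1) (F s2)
        = (2 * g s1 s2) *: xi - eta s2 *: (s1 + N s1 + eta s1 *: xi)].
Proof. by split; [exact: Nsym | exact: nxi | exact: FNs | split | exact: partv]. Qed.

End Prf.

Theorem proposition4p4
  (R : realType) (C : comAlgType R) (V : lmodType C) (M : Type)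
  (ev : M -> C -> R) (n : nat) (e : 'I_n -> V) (eps : 'I_n -> V -> C)
  (m : nat) (rho : V -> C -> C) (br : V -> V -> V)
  (F : V -> V) (xi : V) (eta : V -> C) (g : V -> V -> C)
  (nabla : V -> V -> V) :
  lie_algebroid rho br ->
  vector_bundle ev e eps m.*2.+1 ->
  contact_riem ev eps m rho br F xi eta g ->
  levi_civita rho br g nabla ->
  let N := N3 br F xi in
  [/\ (forall s1 s2, g (N s1) s2 = g s1 (N s2)),
      (forall s, nabla s xi = - F s - F (N s)),
      (forall s, F (N s) = - N (F s)),
      [/\ trace e eps N = 0, trace e eps (fun s => N (F s)) = 0,
          N xi = 0 & forall s, eta (N s) = 0]
    & forall s1 s2,
        covF nabla F s1 s2 + covF nabla F (F s1) (F s2)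
        = (2 * g s1 s2) *: xi - eta s2 *: (s1 + N s1 + eta s1 *: xi)].
Proof. move=> LA VB CR LC; exact: (mainP _ _ _ _ _ _ _ _ _ _ _ _ _ _ _ _ LA VB CR LC). Qed.
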